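(* Let $T$ be a rhombic alternative tableau of type $X\in B_n^r$ with tiling $\mathcal{T}$, and run the label-passing algorithm on $T$. Suppose that a label $J$ is passed along the line of a west-strip $\mathbf{w}$ eastward out of a tile $\mathbf{t}$ of $\mathbf{w}$, and that no tile of $\mathbf{w}$ to the right of $\mathbf{t}$ contains a $\beta$. Then at the completion of the algorithm, the southeast boundary edge (external vertex) of $\mathbf{w}$ carries the label $\{J_{\max}\}$, where $J_{\max}=\max J$.
   Context: Words and diagrams. For $0\le r\le n$ let $B_n^r$ be the set of words $X\in\{H,L,0\}^n$ with exactly $r$ letters $L$. If $X$ has $k$ letters $H$, $r$ letters $L$ and $\ell$ letters $0$, its rhombic diagram $\Gamma(X)$ is the closed region bounded by two paths of unit steps, using the directions west (horizontal), south (vertical) and southwest (diagonal: a fixed unit vector strictly between west and south), both going from a point $P$ to a point $Q$: the northwest boundary consists of $\ell$ west steps, then $r$ southwest steps, then $k$ south steps; the southeast boundary is obtained by reading $X$ left to right and taking a west step for each $0$, a southwest step for each $L$, a south step for each $H$. A tiling of $\Gamma(X)$ is a tiling by unit rhombi of three kinds: squares (horizontal and vertical edges), tall rhombi (vertical and diagonal edges), short rhombi (horizontal and diagonal edges). A west-strip (resp. north-strip, northwest-strip) is a maximal set of tiles connected through shared vertical (resp. horizontal, diagonal) edges; each runs from an edge of the southeast boundary to an edge of the northwest boundary. Rhombic alternative tableaux. A rhombic alternative tableau (RAT) of type $X$ with tiling $\mathcal{T}$ is a filling of the tiles of $\mathcal{T}$, each tile empty or containing one of $\alpha,\beta,q$,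 where $\alpha$ occurs only in squares and short rhombi and $\beta$ only in squares and tall rhombi, such that: (i) every tile in the same west-strip as a tile containing $\beta$ and to its left is empty; (ii) every tile in the same north-strip as a tile containing $\alpha$ and above it is empty; (iii) every tile not forced to be empty by (i),(ii) contains $\alpha$, $\beta$ or $q$. Label-passing algorithm. A label is a finite set of consecutive integers; for labels $C,D$ write $D\succ C$ if both are nonempty and $\min D=\max C+1$. Given a RAT $T$: through each west-strip draw a line through the midpoints of its vertical edges, through each north-strip a line through midpoints of its horizontal edges, and through each northwest-strip a line through midpoints of its diagonal edges (all passing through the tile centres). For every tile containing $\alpha$ erase the part of its north-strip line above the tile's centre; for every tile containing $\beta$ erase the part of its west-strip line to the left of the tile's centre. This yields a forest of binary trees whose branching vertices are the centres of tiles containing $\alpha$ or $\beta$, whose leaves (external vertices) are the southeast boundary edges and whose roots are northwest boundary edges; roots are red/green/blue according as they lie on a west-/northwest-/north-strip. Add a special trivial green root at $Q$ with one fictitious leaf. Order the roots: red roots from top to bottom, then green roots (starting with the special one) from southwest to northeast, then blue roots from left to right. Label the roots so that each root label has as many elements as its tree has leaves (one for the special root), each root's label is $\succ$ the label of the preceding root, and the union of all root labels is $\{1,\dots,n+1\}$. Labels are then passed from the roots towards the leaves (southeastward) along branches, unchanged along branches; when a label $B$ reaches a branching vertex $v$ it is split as $B=C\cup D$ with $D\succ C$, each of the two outgoing branches getting a label of size equal to its number of leaves, according to: (I) if $v$ lies in a rhombus (tall or short), $D$ goes to the outgoing branch along the northwest-strip; (II) if $v$ lies in a square containing $\alpha$,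 $D$ goes to the branch leaving eastward and $C$ to the branch leaving southward; (III) if $v$ lies in a square containing $\beta$, $D$ goes to the branch leaving southward and $C$ to the branch leaving eastward. At completion every southeast boundary edge carries a singleton label. *)

(* Defs.v *)
From HB Require Import structures.
From mathcomp Require Import all_boot.
Set Implicit Arguments.
Unset Strict Implicit.
Unset Printing Implicit Defensive.

Inductive letter := LH | LL | L0.
Definition letter_eqb (a b : letter) : bool :=
  match a, b with LH, LH | LL, LL | L0, L0 => true | _, _ => false end.
Lemma letter_eqP : Equality.axiom letter_eqb.
Proof. by case; case; constructor. Qed.
HB.instance Definition _ := hasDecEq.Build letter letter_eqP.

Inductive cell := Empty | Alpha | Beta | Qc.
Definition cell_eqb (a b : cell) : bool :=
  match a, b with Empty, Empty | Alpha, Alpha | Beta, Beta | Qc, Qc => true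
  | _, _ => false end.
Lemma cell_eqP : Equality.axiom cell_eqb.
Proof. by case; case; constructor. Qed.
HB.instance Definition _ := hasDecEq.Build cell cell_eqP.

Definition in_B (n r : nat) (X : seq letter) : bool :=
  (size X == n) && (count_mem LL X == r).

(* Order 0 < L < H ; a tile is a swap of an adjacent inversion for this order. *)
Definition rank (c : letter) : nat :=
  match c with L0 => 0 | LL => 1 | LH => 2 end.

Section RAT.
Variable X : seq letter.          (* the type; southeast boundary *)
Variable fl : seq nat.            (* the tiling, as a flip sequence *)
Variable fill : nat -> cell.

Local Notation n := (size X).
Local Notation m := (size fl).

(* strips are indexed by the position w < n of their southeast boundary edge
   in X; the strip is a west-/northwest-/north-strip iff X_w = H / L / 0. *)
Definition typ (w : nat) : letter := nth L0 X w.

Definition swap_at (s : seq nat) (p : nat) : seq nat :=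
  take p s ++ [:: nth 0 s p.+1; nth 0 s p] ++ drop p.+2 s.

(* intermediate path after k tiles have been swept from the SE boundary:
   the sequence of strips whose edges it consists of, from P to Q *)
Definition state (k : nat) : seq nat := foldl swap_at (iota 0 n) (take k fl).

Definition tpos (k : nat) : nat := nth 0 fl k.
(* the two strips crossing at tile number k *)
Definition ta (k : nat) : nat := nth 0 (state k) (tpos k).
Definition tb (k : nat) : nat := nth 0 (state k) (tpos k).+1.

Definition tile_has (k w : nat) : bool := (w == ta k) || (w == tb k).
Definition tile_hasT (k : nat) (c : letter) : bool :=
  (typ (ta k) == c) || (typ (tb k) == c).
(* the strip of letter-type c through tile k (meaningful if tile_hasT k c) *)
Definition strip_of (k : nat) (c : letter) : nat :=
  if typ (ta k) == c then ta k else tb k.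

(* square: {H,0}; tall rhombus: {H,L}; short rhombus: {L,0} *)
Definition is_square k := tile_hasT k LH && tile_hasT k L0.
Definition is_rhombus k := tile_hasT k LL.

(* fl encodes a tiling of Gamma(X): every step swaps an adjacent inversion,
   and at the end the path is the northwest boundary 0^l L^r H^k. *)
Definition valid_tiling : Prop :=
  (forall k, k < m -> (tpos k).+1 < n /\ rank (typ (tb k)) < rank (typ (ta k)))
  /\ sorted leq [seq rank (typ w) | w <- state m].

(* tile k is forced empty by rules (i),(ii): it lies to the left of a beta in
   its west-strip, or above an alpha in its north-strip.  Along a strip,
   tiles with larger index are further northwest (left / above). *)
Definition forced (k : nat) : Prop :=
  exists k0 w, k0 < k /\ tile_has k0 w /\ tile_has k w /\
    ((typ w = LH /\ fill k0 = Beta) \/ (typ w = L0 /\ fill k0 = Alpha)).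

Definition is_RAT : Prop :=
  valid_tiling /\
  (forall k, k < m -> fill k = Alpha -> tile_hasT k L0) /\
  (forall k, k < m -> fill k = Beta -> tile_hasT k LH) /\
  (forall k k' w, k < k' -> k' < m -> typ w = LH -> tile_has k w ->
     tile_has k' w -> fill k = Beta -> fill k' = Empty) /\
  (forall k k' w, k < k' -> k' < m -> typ w = L0 -> tile_has k w ->
     tile_has k' w -> fill k = Alpha -> fill k' = Empty) /\
  (forall k, k < m -> ~ forced k -> fill k <> Empty).

(* A "point" (k, w) is the midpoint of the edge of strip w in
   the intermediate path state k (k = 0: southeast boundary, k = m:
   northwest boundary).  The line of w is present there unless it was erased:
   west-strip lines left of a beta, north-strip lines above an alpha. *)
Definition alive (w k : nat) : bool :=
  match typ w with
  | LH => ~~ has (fun k0 => tile_has k0 w && (fill k0 == Beta)) (iota 0 k)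
  | L0 => ~~ has (fun k0 => tile_has k0 w && (fill k0 == Alpha)) (iota 0 k)
  | LL => true
  end.

Definition branching (k : nat) : bool := (fill k == Alpha) || (fill k == Beta).
(* the line erased on the northwest side of a branching tile *)
Definition cut (k : nat) : nat :=
  if fill k == Alpha then strip_of k L0 else strip_of k LH.
(* the line that goes through a branching tile (the incoming branch) *)
Definition cont (k : nat) : nat := if cut k == ta k then tb k else ta k.

Fixpoint nleaves (k w : nat) : nat :=
  match k with
  | 0 => 1
  | k'.+1 =>
    if tile_has k' w && branching k' then
      (if w == cont k' then nleaves k' (ta k') + nleaves k' (tb k') else 0)
    else nleaves k' w
  end.

(* outgoing branch receiving D (the upper part) at a branching tile k:
   (I) rhombus: along the northwest-strip; (II) alpha square: eastward, i.e.
   along the west-strip; (III) beta square: southward, i.e. along the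
   north-strip. *)
Definition drecv (k : nat) : nat :=
  if is_rhombus k then strip_of k LL
  else if fill k == Alpha then strip_of k LH else strip_of k L0.
Definition crecv (k : nat) : nat := if drecv k == ta k then tb k else ta k.

(* roots, in the prescribed order; None is the special green root at Q.
   Red: H-edges of the NW boundary top to bottom (path order);
   green: special, then L-edges southwest to northeast (reverse path order);
   blue: 0-edges left to right (reverse path order). *)
Definition roots : seq (option nat) :=
  map Some [seq w <- state m | (typ w == LH) && alive w m] ++
  None :: rev (map Some [seq w <- state m | (typ w == LL) && alive w m]) ++
  rev (map Some [seq w <- state m | (typ w == L0) && alive w m]).

Definition root_size (o : option nat) : nat :=
  match o with None => 1 | Some w => nleaves m w end.

Definition root_label (w : nat) : seq nat :=
  let sz := map root_size roots in
  let i := index (Some w) roots in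
  iota (1 + sumn (take i sz)) (nth 0 sz i).

(* label on point (k, w), computed from the roots towards the leaves.
   At a branching tile the incoming label B is split as C ++ D with
   |C| = number of leaves of the branch receiving C. *)
Fixpoint labelF (d k w : nat) : seq nat :=
  match d with
  | 0 => root_label w
  | d'.+1 =>
    if tile_has k w && branching k then
      let B := labelF d' k.+1 (cont k) in
      let c := nleaves k (crecv k) in
      if w == drecv k then drop c B else take c B
    else labelF d' k.+1 w
  end.

Definition label (k w : nat) : seq nat := labelF (m - k) k w.

End RAT.

(* Main.v *)
Require Import Defs.
From mathcomp Require Import all_boot zify.

Lemma swap_perm (s : seq nat) p : p.+1 < size s -> perm_eq (swap_at s p) s.
Proof.
move=> hp; rewrite /swap_at.
have E : drop p s = nth 0 s p :: nth 0 s p.+1 :: drop p.+2 s.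
  by rewrite (drop_nth 0) ?(drop_nth 0 (n := p.+1)) //; lia.
rewrite -[X in perm_eq _ X](cat_take_drop p s) E perm_cat2l.
apply/permP => P /=; lia.
Qed.

Lemma state_perm X fl k : (forall j, j < size fl -> (tpos fl j).+1 < size X) ->
  k <= size fl -> perm_eq (state X fl k) (iota 0 (size X)).
Proof.
move=> hv; elim: k => [|k IH] hk; first by rewrite /state take0.
rewrite /state (take_nth 0) // foldl_rcons.
apply: perm_trans (IH (ltnW hk)); apply: swap_perm.
rewrite (perm_size (IH (ltnW hk))) size_iota; exact: hv.
Qed.

Lemma max_iota a b : \max_(j <- iota a b.+1) j = a + b.
Proof.
elim: b a => [|b IH] a; first by rewrite big_cons big_nil; lia.
rewrite /= big_cons IH; lia.
Qed.

Lemma tile_ok X fl fill k : is_RAT X fl fill -> k < size fl ->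
  [/\ ta X fl k < size X, tb X fl k < size X &
      rank (typ X (tb X fl k)) < rank (typ X (ta X fl k))].
Proof.
move=> [[hv _] _] hk.
have hv' : forall j, j < size fl -> (tpos fl j).+1 < size X by move=> j /hv [].
have P := @state_perm X fl k hv' (ltnW hk).
have [hp hr] := hv k hk.
have sz : size (state X fl k) = size X by rewrite (perm_size P) size_iota.
have mem : forall i, i < size X -> nth 0 (state X fl k) i < size X.
  move=> i hi; have : nth 0 (state X fl k) i \in iota 0 (size X).
    by rewrite -(perm_mem P) mem_nth // sz.
  by rewrite mem_iota.
split => //; [apply: mem; lia | apply: mem; lia].
Qed.

Lemma label_iota X fl fill d k w : exists a b, labelF X fl fill d k w = iota a b.
Proof.
elim: d k w => [|d IH] k w /=; first by rewrite /root_label; eauto.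
case: ifP => _; last exact: IH.
have [a [b ->]] := IH k.+1 (cont X fl fill k).
case: ifP => _; [rewrite drop_iota | rewrite take_iota]; eauto.
Qed.
Lemma dead_zero X fl fill w : is_RAT X fl fill -> w < size X ->
  ~~ alive X fl fill w (size fl) -> nleaves X fl fill (size fl) w = 0.
Proof.
move=> HR hw0; have HR' := HR; move: HR' => [_ [_ [_ [H4 [H5 _]]]]].
rewrite /alive; case Ht: (typ X w) => //=; rewrite negbK => /hasP [k0];
  rewrite mem_iota add0n => /andP[_ hk0] /andP[hw /eqP hb];
  (suff: forall j, k0 < j -> j <= size fl -> nleaves X fl fill j w = 0 by apply);
  (elim => [|j IH] // hj hjm /=);
  (case: (eqVneq j k0) => [->|ne]).
- have [_ _ hr] := tile_ok _ _ _ _ HR hk0.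
  rewrite hw /branching hb /= /cont /cut /strip_of hb /=.
  move: hw hr; rewrite /tile_has.
  move: (ta X fl k0) (tb X fl k0) => a b.
  case/orP => /eqP ?; subst w; rewrite Ht /= => hr.
    case: (eqVneq a b) hr => [<-|ne] hr; first by move: hr; rewrite ?Ht ?ltnn.
    by rewrite eqxx (negbTE ne).
  by move: hr; case: (typ X a).
- case: ifP => [/andP[hwj hbr]|_]; last by apply: IH; lia.
  have := H4 k0 j w ltac:(lia) hjm Ht hw hwj hb.
  by move: hbr; rewrite /branching => /orP[] /eqP ->.
- have [_ _ hr] := tile_ok _ _ _ _ HR hk0.
  rewrite hw /branching hb /= /cont /cut /strip_of hb /=.
  move: hw hr; rewrite /tile_has.
  move: (ta X fl k0) (tb X fl k0) => a b.
  case/orP => /eqP ?; subst w; rewrite Ht /= => hr.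
    by move: hr; case: (typ X b).
  case: (eqVneq a b) hr => [eab|ne] hr; first by move: hr; rewrite eab Ht.
  have -> : (typ X a == L0) = false by move: hr; case: (typ X a).
  have nba : (b == a) = false by rewrite eq_sym (negbTE ne).
  by rewrite !nba.
- case: ifP => [/andP[hwj hbr]|_]; last by apply: IH; lia.
  have := H5 k0 j w ltac:(lia) hjm Ht hw hwj hb.
  by move: hbr; rewrite /branching => /orP[] /eqP ->.
Qed.
Lemma in_roots X fl fill w : is_RAT X fl fill -> w < size X ->
  (Some w \in Defs.roots X fl fill) = alive X fl fill w (size fl).
Proof.
move=> [[hv _] _] hw.
have hv' : forall j, j < size fl -> (tpos fl j).+1 < size X by move=> j /hv [].
have P := @state_perm X fl (size fl) hv' (leqnn _).
have ws : w \in state X fl (size fl) by rewrite (perm_mem P) mem_iota.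
rewrite /Defs.roots !(mem_cat, in_cons, mem_rev, mem_map (@Some_inj _), mem_filter) ws /=.
by case: (typ X w) => /=; rewrite ?andbT ?orbF.
Qed.

Lemma size_label X fl fill d k w : is_RAT X fl fill -> k + d = size fl ->
  w < size X -> size (labelF X fl fill d k w) = nleaves X fl fill k w.
Proof.
move=> HR; elim: d k w => [|d IH] k w hkd hw.
  rewrite addn0 in hkd; subst k => /=.
  rewrite /root_label size_iota.
  case: (boolP (Some w \in Defs.roots X fl fill)) => hin.
    by rewrite (nth_map None) ?index_mem // nth_index.
  rewrite nth_default; last by rewrite size_map memNindex.
  by rewrite dead_zero // -in_roots.
have hk : k < size fl by lia.
have [ha hb hr] := tile_ok _ _ _ _ HR hk.
have ab : ta X fl k != tb X fl k.
  by apply/eqP => e; rewrite e ltnn in hr.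
rewrite /=.
case: ifP => [/andP[hwk hbr]|hn]; last first.
  by rewrite IH ?addSnnS // /= hn.
have hc : tile_has X fl k (cont X fl fill k).
  by rewrite /tile_has /cont; case: ifP; rewrite eqxx ?orbT.
have hcn : cont X fl fill k < size X by rewrite /cont; case: ifP.
have hd : drecv X fl fill k = ta X fl k \/ drecv X fl fill k = tb X fl k.
  by rewrite /drecv /strip_of; repeat case: ifP; auto.
case: ifP => hdw; [rewrite size_drop | rewrite size_take];
  rewrite IH ?addSnnS //= hc hbr eqxx /= /crecv;
  move: hwk hdw hd ab; rewrite /tile_has;
  move: (drecv X fl fill k) (ta X fl k) (tb X fl k) => dd a b;
  case/orP => /eqP -> hdw [?|?] ab; subst dd;
  have ba : b != a by rewrite eq_sym.
all: rewrite ?eqxx ?(negbTE ab) ?(negbTE ba) //= in hdw *.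
all: try lia.
all: case: ifP; lia.
Qed.
Lemma alpha_tile X fl fill k w : is_RAT X fl fill -> k < size fl ->
  typ X w = LH -> tile_has X fl k w -> fill k = Alpha ->
  cont X fl fill k = w /\ drecv X fl fill k = w.
Proof.
move=> HR hk Ht hw hA.
have [_ [H2 _]] := HR.
have HA := H2 k hk hA.
have [_ _ hr] := tile_ok _ _ _ _ HR hk.
move: hw HA hr; rewrite /cont /cut /drecv /is_rhombus /strip_of /tile_hasT /tile_has hA /=.
move: (ta X fl k) (tb X fl k) => a b.
case/orP => /eqP ?; subst w; rewrite Ht /=.
- move=> /eqP Hb _; rewrite Hb /=.
  have ab : (b == a) = false by apply/negP => /eqP e; rewrite e Ht in Hb.
  by rewrite ab.
- by move=> _; case: (typ X a).
Qed.

Lemma down X fl fill w t e : is_RAT X fl fill -> typ X w = LH -> t < size fl ->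
  (forall t', t' < t -> tile_has X fl t' w -> fill t' <> Beta) ->
  forall k, k + e = t -> exists C, label X fl fill k w = drop C (label X fl fill t w).
Proof.
move=> HR Ht ht hnb; elim: e => [|e IH] k hke.
  by exists 0; rewrite drop0 -hke addn0.
have hk : k < size fl by lia.
have [C HC] := IH k.+1 ltac:(lia).
rewrite /label.
have -> : size fl - k = (size fl - k.+1).+1 by lia.
rewrite /=.
case: ifP => [/andP[hw hbr]|_]; last by exists C.
have hA : fill k = Alpha.
  move: hbr; rewrite /branching => /orP[/eqP //|/eqP hB].
  by exfalso; apply: (hnb k) => //; lia.
have [-> ->] := alpha_tile _ _ _ _ _ HR hk Ht hw hA.
rewrite eqxx.
change (labelF X fl fill (size fl - k.+1) k.+1 w) with (label X fl fill k.+1 w).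
rewrite HC drop_drop; eexists; reflexivity.
Qed.

Theorem lemma3p9 (n r : nat) (X : seq letter) (fl : seq nat)
    (fill : nat -> cell) (w t : nat) :
  in_B n r X ->
  is_RAT X fl fill ->
  w < n -> typ X w = LH ->
  t < size fl -> tile_has X fl t w ->
  (forall t', t' < t -> tile_has X fl t' w -> fill t' <> Beta) ->
  label X fl fill 0 w = [:: \max_(j <- label X fl fill t w) j].
Proof.
move=> /andP[/eqP hn _] HR hw Ht ht htw hnb.
subst n.
have [C HC] := down _ _ _ _ _ t HR Ht ht hnb 0 (add0n t).
have hs : size (label X fl fill 0 w) = 1.
  by rewrite /label size_label // subn0.
have [a [b Hab]] := label_iota X fl fill (size fl - t) t w.
rewrite -/(label X fl fill t w) in Hab.
rewrite HC Hab drop_iota in hs *.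
rewrite size_iota in hs.
have -> : b = C.+1 by lia.
by rewrite max_iota; have -> : C.+1 - C = 1 by lia.
Qed.
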